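(* Under the hypotheses of Proposition 2 (invariance $f(x,\mu^0(x))\in S^0$ for all $x\in S^0$, terminal cost $\bar J_{S^0}$, lookahead $\ell\ge1$), for every $x\in X$, writing $x'=f(x,\tilde\mu(x))$, we have $$g(x,\tilde\mu(x))+\tilde J_{S^0}(x')\le \tilde J_{S^0}(x).$$ In particular, if $\tilde J_{S^0}(x)<\infty$ then $\tilde J_{S^0}(x')<\infty$ (recursive feasibility), and $\tilde J_{S^0}$ is nonincreasing along any trajectory generated by the rollout policy $\tilde\mu$.
   Context: Deterministic infinite-horizon problem: arbitrary state space $X$ and control space $U$, dynamics $x_{k+1}=f(x_k,u_k)$ with $f:X\times U\to X$, nonempty control constraint sets $U(x)\subset U$, and stage cost $g(x,u)\in[0,\infty]$ for all $x\in X$, $u\in U(x)$. A stationary policy is a map $\mu:X\to U$ with $\mu(x)\in U(x)$; its cost function is $J_\mu(x_0)=\sum_{k=0}^\infty g(x_k,\mu(x_k))$ with $x_{k+1}=f(x_k,\mu(x_k))$. Assumption: for every $J:X\to[0,\infty]$ and every $x\in X$, $\inf_{u\in U(x)}\{g(x,u)+J(f(x,u))\}$ is attained. Given $S^0\subset X$ and $\mu^0$, $\bar J_{S^0}(x)=J_{\mu^0}(x)$ if $x\in S^0$ and $\infty$ otherwise. With $J_0=\bar J_{S^0}$, $J_{k+1}(x)=\min_{u\in U(x)}\{g(x,u)+J_k(f(x,u))\}$, set $\tilde J_{S^0}=J_\ell$ (the optimal value of minimizing $\sum_{k=0}^{\ell-1}g(x_k,u_k)+\bar J_{S^0}(x_\ell)$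 over $u_k\in U(x_k)$ with $x_0=x$, $x_{k+1}=f(x_k,u_k)$), and the rollout policy $\tilde\mu(x)\in\arg\min_{u\in U(x)}\{g(x,u)+J_{\ell-1}(f(x,u))\}$ (the first control of a minimizing sequence). *)

(* Defs.v *)
From mathcomp Require Import all_boot all_order all_algebra.
From mathcomp Require Import boolp classical_sets reals ereal topology sequences.
Set Implicit Arguments. Unset Strict Implicit. Unset Printing Implicit Defensive.
Import Order.TTheory GRing.Theory Num.Theory.
Local Open Scope classical_set_scope.
Local Open Scope ereal_scope.

Section DP.
Context {R : realType} {X U : Type}.
Variables (f : X -> U -> X) (g : X -> U -> \bar R).

Fixpoint traj (mu : X -> U) (x0 : X) (k : nat) : X :=
  match k with 0%N => x0 | k'.+1 => f (traj mu x0 k') (mu (traj mu x0 k')) end.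

Definition Jpol (mu : X -> U) (x0 : X) : \bar R :=
  \sum_(0 <= k <oo) g (traj mu x0 k) (mu (traj mu x0 k)).

Definition Jbar (S0 : set X) (mu0 : X -> U) (x : X) : \bar R :=
  if `[< S0 x >] then Jpol mu0 x else +oo.

Definition bellman (Uc : X -> set U) (J : X -> \bar R) (x : X) : \bar R :=
  ereal_inf [set g x u + J (f x u) | u in Uc x].

Fixpoint Jiter (Uc : X -> set U) (J0 : X -> \bar R) (k : nat) : X -> \bar R :=
  match k with 0%N => J0 | k'.+1 => bellman Uc (Jiter Uc J0 k') end.

End DP.

(* Main.v *)
Require Import Defs.
From mathcomp Require Import all_boot all_order all_algebra.
From mathcomp Require Import boolp classical_sets reals ereal topology sequences.
Import Order.TTheory GRing.Theory Num.Theory.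
Local Open Scope classical_set_scope.
Local Open Scope ereal_scope.

Theorem mainTheorem3 (R : realType) (X U : Type)
  (f : X -> U -> X) (Uc : X -> set U) (g : X -> U -> \bar R)
  (S0 : set X) (mu0 : X -> U) (l : nat) (mut : X -> U) :
  (forall x, Uc x !=set0) ->
  (forall x u, Uc x u -> 0 <= g x u) ->
  (* the infimum in the Bellman operator is attained for every J : X -> [0,oo] *)
  (forall (J : X -> \bar R), (forall y, 0 <= J y) -> forall x,
     exists2 u, Uc x u & forall v, Uc x v -> g x u + J (f x u) <= g x v + J (f x v)) ->
  (forall x, Uc x (mu0 x)) ->
  (forall x, S0 x -> S0 (f x (mu0 x))) ->
  (1 <= l)%N ->
  (* rollout policy: first control of a minimizing l-step sequence *)
  (forall x, Uc x (mut x) /\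
     forall v, Uc x v ->
       g x (mut x) + Jiter f g Uc (Jbar f g S0 mu0) l.-1 (f x (mut x))
       <= g x v + Jiter f g Uc (Jbar f g S0 mu0) l.-1 (f x v)) ->
  let Jt := Jiter f g Uc (Jbar f g S0 mu0) l in
  (forall x, g x (mut x) + Jt (f x (mut x)) <= Jt x) /\
  (forall x, Jt x < +oo -> Jt (f x (mut x)) < +oo) /\
  (forall x k, Jt (traj f mut x k.+1) <= Jt (traj f mut x k)).
Proof.
move=> _ g0 _ Umu0 inv hl hmut.
case: l hl hmut => [//|l] _ hmut Jt.
set J := Jiter f g Uc (Jbar f g S0 mu0).
have mono : forall (J1 J2 : X -> \bar R), (forall y, J1 y <= J2 y) ->
    forall x, bellman f g Uc J1 x <= bellman f g Uc J2 x.
  move=> J1 J2 H x; apply: le_ereal_inf_tmp => _ [u Uu <-].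
  apply: le_trans (leeD2l _ (H _)).
  by apply: ereal_inf_lbound; exists u.
have trajS : forall x k, traj f mu0 (f x (mu0 x)) k = traj f mu0 x k.+1.
  by move=> x; elim=> [//|k IH] /=; rewrite IH.
have step0 : forall x, J 1%N x <= J 0%N x.
  move=> x; rewrite /J /= /Jbar; case: (pselect (S0 x)) => Sx.
    have Sfx := inv _ Sx.
    rewrite (asboolT Sx).
    apply: le_trans (ereal_inf_lbound _) _; first by exists (mu0 x).
    rewrite /Jbar (asboolT Sfx) /Jpol.
    have nn : forall k, (0%N <= k)%N -> 0 <= g (traj f mu0 x k) (mu0 (traj f mu0 x k)).
      by move=> k _; apply: g0; apply: Umu0.
    rewrite (@nneseries_split _ _ 0 1 nn) add0n big_nat1 /=.
    rewrite -(nneseries_addn 1); last by move=> i; apply: g0; apply: Umu0.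
    apply: leeD2l; rewrite le_eqVlt; apply/orP; left; apply/eqP; apply: eq_eseriesr => k _.
    by rewrite trajS addn1.
  by rewrite (asboolF Sx) leey.
have dec : forall k x, J k.+1 x <= J k x.
  elim=> [|k IH] x; first exact: step0.
  exact: mono.
have p1 : forall x, g x (mut x) + Jt (f x (mut x)) <= Jt x.
  move=> x; rewrite /Jt.
  rewrite [Jiter _ _ _ _ _.+1]/=; apply: le_ereal_inf_tmp => _ [u Uu <-].
  apply: le_trans (proj2 (hmut x) u Uu) => /=.
  by apply: leeD2l; apply: dec.
have p0 : forall x, Jt (f x (mut x)) <= Jt x.
  move=> x; apply: le_trans (p1 x).
  by apply: leeDr; apply: g0; case: (hmut x).
split; first exact: p1.
split; first by move=> x Hx; exact: (le_lt_trans (p0 x) Hx).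
move=> x k; exact: p0.
Qed.
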